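(* Let $\bm\mu=(\mu_1,\dots,\mu_r)$ be finite positive Borel measures on the unit circle with infinite supports, fix the square-root branch as in the context, let $\bm n\in\mathbb N^r$ and $\tau\in\partial\mathbb D$. Then $\bm n$ is $\phi$-normal if and only if there is no nonzero $X\in\operatorname{span}\{z^p\}_{p=-(|\bm n|-1)/2}^{(|\bm n|-1)/2}$ such that $X(z)=\tau\overline{X(1/\bar z)}$ and $\int X(z)z^{-p}\,d\mu_j(z)=0$ for $p=-(n_j-1)/2,\dots,(n_j-1)/2$, $j=1,\dots,r$.
   Context: $\partial\mathbb D=\{|z|=1\}$. Fix $t_0\in\mathbb R$ and let $z^{k/2}=|z|^{k/2}\exp(ik\arg_{[t_0,t_0+2\pi)}(z)/2)$ for $k\in\mathbb Z$. $|\bm n|=\sum_j n_j$; $\operatorname{span}\{z^p\}_{p=a}^b$ ($b-a\in\mathbb Z$) is the span of $z^a,z^{a+1},\dots,z^b$ (zero space if $a>b$; the range of $p$ in an orthogonality condition is empty when $n_j=0$). $\bm n$ is $\phi$-normal if there is a unique $\phi\in\operatorname{span}\{z^p\}_{p=-|\bm n|/2}^{|\bm n|/2}$ with coefficient of $z^{|\bm n|/2}$ equal to $1$ and $\int\phi(z)z^{-p}\,d\mu_j(z)=0$ for $p=-n_j/2,\dots,n_j/2-1$, $j=1,\dots,r$ (by convention $\bm 0$ is $\phi$-normal). *)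

(* Defs.v *)
From HB Require Import structures.
From mathcomp Require Import all_boot all_order all_algebra.
From mathcomp Require Import all_classical all_reals all_analysis.
From mathcomp Require Import complex.
Set Implicit Arguments. Unset Strict Implicit. Unset Printing Implicit Defensive.
Import Order.TTheory GRing.Theory Num.Theory.
Local Open Scope ring_scope.
Local Open Scope complex_scope.
Local Open Scope classical_set_scope.

Section Defs.
Variable R : realType.

(* The complex plane C = R[i]; points of R * R (the measurable space carrying
   the measures, with its product = Borel sigma-algebra) are identified with
   complex numbers via toC. *)
Definition toC (q : (R * R)%type) : R[i] := q.1 +i* q.2.

Definition unit_circle : set (R * R)%type :=
  [set q | q.1 ^+ 2 + q.2 ^+ 2 = 1].

Definition disc (x : (R * R)%type) (e : R) : set (R * R)%type :=
  [set q | (q.1 - x.1) ^+ 2 + (q.2 - x.2) ^+ 2 < e ^+ 2].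

Definition msupport (mu : set (R * R)%type -> \bar R) : set (R * R)%type :=
  [set x | forall e : R, 0 < e -> (0 < mu (disc x e))%E].

Definition expi (t : R) : R[i] := cos t +i* sin t.

Definition polar (t0 : R) (z : R[i]) : (R * R)%type :=
  xget (1, t0) [set rt : (R * R)%type | 0 < rt.1 /\
     t0 <= rt.2 < t0 + 2 * pi /\ z = (rt.1)%:C * expi rt.2].

Definition zhalf (t0 : R) (k : int) (z : R[i]) : R[i] :=
  ((polar t0 z).1 `^ (k%:~R / 2))%:C * expi (k%:~R * (polar t0 z).2 / 2).

Definition cint (mu : {measure set (R * R)%type -> \bar R}) (f : (R * R)%type -> R[i])
  : R[i] :=
  (Rintegral mu setT (fun q => complex.Re (f q))) +i* (Rintegral mu setT (fun q => complex.Im (f q))).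

(* Element of span{z^p}_{p=a}^{a+m-1} given by its coefficient vector
   c : 'I_m -> C; here a2 = 2a is an integer and the i-th basis function
   is z^{(a2 + 2 i)/2}. *)
Definition spanfun (t0 : R) (a2 : int) (m : nat) (c : 'I_m -> R[i]) (z : R[i])
  : R[i] :=
  \sum_(i < m) c i * zhalf t0 (a2 + 2 * (i : nat)%:Z) z.

Definition nabs (r : nat) (n : 'I_r -> nat) : nat := \sum_(j < r) n j.

(* phi-normality of n.  phi ranges over span{z^p}_{p=-|n|/2}^{|n|/2}, i.e. the
   coefficient vectors c : 'I_(|n|+1) -> C with basis z^{(-|n| + 2i)/2};
   the coefficient of z^{|n|/2} is c ord_max.  Orthogonality:
   int phi(z) z^{-p} dmu_j = 0 for p = -n_j/2, ..., n_j/2 - 1, i.e.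
   2p = -n_j + 2l, l < n_j. *)
Definition phi_normal (t0 : R) (r : nat) (mu : 'I_r -> {measure set (R * R)%type -> \bar R})
  (n : 'I_r -> nat) : Prop :=
  n = (fun _ => 0%N) \/
  exists! c : 'I_(nabs n).+1 -> R[i],
    c ord_max = 1 /\
    forall (j : 'I_r) (l : 'I_(n j)),
      cint (mu j) (fun q =>
        spanfun t0 (- (nabs n)%:Z) c (toC q) *
        zhalf t0 (- (- (n j)%:Z + 2 * (l : nat)%:Z)) (toC q)) = 0.

End Defs.

(* Main.v *)
Require Import Defs.
From HB Require Import structures.
From mathcomp Require Import all_boot all_order all_algebra.
From mathcomp Require Import all_classical all_reals all_analysis.
From mathcomp Require Import complex.
From mathcomp Require Import measurable_realfun.
Import Order.TTheory GRing.Theory Num.Theory.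
Import numFieldNormedType.Exports.
Local Open Scope ring_scope.
Local Open Scope complex_scope.
Local Open Scope classical_set_scope.
From mathcomp Require Import ring lra.
Set Implicit Arguments. Unset Strict Implicit. Unset Printing Implicit Defensive.

Section Basic.
Variable R : realType.
Implicit Types (a b c d x y t : R).

Lemma mulcE a b c d : (a +i* b) * (c +i* d) = (a*c - b*d) +i* (a*d + b*c) :> R[i].
Proof. by []. Qed.
Lemma addcE a b c d : (a +i* b) + (c +i* d) = (a+c) +i* (b+d) :> R[i].
Proof. by []. Qed.
Lemma conjcE a b : conjc (a +i* b) = a +i* (-b) :> R[i].
Proof. by []. Qed.
Lemma realcE a : a%:C = a +i* 0 :> R[i].
Proof. by []. Qed.
Lemma normcE a b : `|a +i* b| = (Num.sqrt (a^+2 + b^+2))%:C :> R[i].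
Proof. by []. Qed.

Lemma rexpi r t : r%:C * expi t = (r * cos t) +i* (r * sin t) :> R[i].
Proof. by rewrite /expi realcE mulcE; congr (_ +i* _); ring. Qed.

Lemma expiD x y : expi x * expi y = expi (x + y) :> R[i].
Proof. by rewrite /expi mulcE cosD sinD; congr (_ +i* _); ring. Qed.

Lemma NconjE (z : R[i]) : Num.conj z = conjc z.
Proof. by []. Qed.

Lemma conj_expi x : conjc (expi x) = expi (- x) :> R[i].
Proof. by rewrite /expi conjcE cosN sinN. Qed.

Lemma expi0 : expi 0 = 1 :> R[i].
Proof. by rewrite /expi cos0 sin0. Qed.

Lemma angle_unique (t0 t t' : R) : t0 <= t < t0 + 2 * pi -> t0 <= t' < t0 + 2 * pi ->
  cos t = cos t' -> sin t = sin t' -> t = t'.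
Proof.
wlog tt' : t t' / t <= t'.
  move=> H h1 h2 hc hs; case: (lerP t t') => tt'; first exact: H.
  by apply/esym/H => //; apply: ltW.
move=> /andP[h1 h2] /andP[h3 h4] hc hs.
set dd := t' - t.
have d0 : 0 <= dd by rewrite subr_ge0.
have d2 : dd < 2 * pi by rewrite /dd; lra.
have cd : cos dd = 1.
  rewrite /dd cosD cosN sinN -hc -hs.
  by have := cos2Dsin2 t; rewrite !expr2 => <-; ring.
set h := dd / 2.
have hh : dd = h + h by rewrite /h; field.
have sh : sin h = 0.
  have : cos dd = 1 - 2 * sin h ^+ 2.
    by rewrite hh cosD; have := cos2Dsin2 h; rewrite !expr2 => H; lra.
  rewrite cd => H; have : sin h ^+ 2 = 0 by lra.
  by move/eqP; rewrite sqrf_eq0 => /eqP.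
have h0 : 0 <= h by rewrite /h; lra.
have hpi : h < pi by rewrite /h; lra.
case: (ltrP 0 h) => hp.
  have : 0 < h < pi by rewrite hp hpi.
  by move/sin_gt0_pi; rewrite sh ltxx.
have : h = 0 by apply/eqP; rewrite eq_le hp h0.
move=> h00; have : dd = 0 by rewrite hh h00 addr0.
by rewrite /dd => /eqP; rewrite subr_eq0 => /eqP.
Qed.

End Basic.

Section Polar.
Variables (R : realType) (t0 : R).

Definition Ppolar (z : R[i]) : set (R * R)%type :=
  [set rt : (R * R)%type | 0 < rt.1 /\
     t0 <= rt.2 < t0 + 2 * pi /\ z = (rt.1)%:C * expi rt.2].

Lemma polarE z : polar t0 z = xget (1, t0) (Ppolar z).
Proof. by []. Qed.

Lemma sqr_pos (x : R) : x != 0 -> 0 < x ^+ 2.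
Proof. by move=> x0; rewrite lt_neqAle sqr_ge0 andbT eq_sym sqrf_eq0. Qed.

Lemma Ppolar_unique z p p' : Ppolar z p -> Ppolar z p' -> p = p'.
Proof.
case: p => r t; case: p' => r' t' /= [r0 [ht ->]] [r0' [ht' E]].
simpl in *; move: E; rewrite !rexpi => E.
have e1 := congr1 (@complex.Re R) E; have e2 := congr1 (@complex.Im R) E; simpl in e1, e2.
have E2 : r ^+ 2 = r' ^+ 2.
  transitivity ((r * cos t) ^+ 2 + (r * sin t) ^+ 2).
    by rewrite -[LHS]mulr1 -(cos2Dsin2 t); ring.
  by rewrite e1 e2 -[RHS]mulr1 -(cos2Dsin2 t'); ring.
have rr : r = r' by nra.
subst r'.
have rn : r != 0 by rewrite gt_eqF.
have hc : cos t = cos t' by apply: (mulfI rn).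
have hs : sin t = sin t' by apply: (mulfI rn).
by rewrite (angle_unique ht ht' hc hs).
Qed.

Definition clamp1 (x : R) : R := Num.max (-1) (Num.min 1 x).

Definition argE (x y : R) : R :=
  let r := Num.sqrt (x ^+ 2 + y ^+ 2) in
  let xr := x * cos t0 + y * sin t0 in
  let yr := y * cos t0 - x * sin t0 in
  let c := clamp1 (xr * r^-1) in
  t0 + (if 0 <= yr then acos c else 2 * pi - acos c).

Lemma Ppolar_ex (x y : R) : x +i* y != 0 ->
  Ppolar (x +i* y) (Num.sqrt (x ^+ 2 + y ^+ 2), argE x y).
Proof.
move=> nz.
have hxy : 0 < x ^+ 2 + y ^+ 2.
  case: (eqVneq x 0) => [x0|x0].
    have y0 : y != 0 by apply: contraNneq nz => ->; rewrite x0.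
    by rewrite x0 expr0n /= add0r sqr_pos.
  by apply: (lt_le_trans (sqr_pos x0)); rewrite lerDl sqr_ge0.
rewrite /argE /=.
set r := Num.sqrt _.
set xr := x * cos t0 + y * sin t0.
set yr := y * cos t0 - x * sin t0.
have r0 : 0 < r by rewrite sqrtr_gt0.
have rn : r != 0 by rewrite gt_eqF.
have r2 : r ^+ 2 = x ^+ 2 + y ^+ 2 by rewrite sqr_sqrtr // ltW.
have cs := cos2Dsin2 t0.
have xy2 : xr ^+ 2 + yr ^+ 2 = x ^+ 2 + y ^+ 2.
  rewrite -[RHS]mulr1 -cs /xr /yr; ring.
set c0 := xr * r^-1.
set s0 := yr * r^-1.
have rc : r * c0 = xr by rewrite /c0 mulrC divfK.
have rs : r * s0 = yr by rewrite /s0 mulrC divfK.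
have cs0 : c0 ^+ 2 + s0 ^+ 2 = 1.
  apply: (mulfI (expf_neq0 2 rn)); rewrite mulr1.
  transitivity ((r * c0) ^+ 2 + (r * s0) ^+ 2); first by ring.
  by rewrite rc rs xy2 r2.
have c1 : -1 <= c0 <= 1 by apply/andP; split; nra.
have cl : clamp1 c0 = c0.
  by rewrite /clamp1 min_r ?max_r //; case/andP: c1.
rewrite cl.
set al := (if 0 <= yr then _ else _).
have [ca [sa [a0 a2]]] : cos al = c0 /\ sin al = s0 /\ 0 <= al /\ al < 2 * pi.
  have [/andP[ac0 acpi] cac] := acos_def c1.
  have pi0 := pi_gt0 R.
  rewrite /al; case: ifPn => hyr.
    have s00 : 0 <= s0 by rewrite /s0 mulr_ge0 // invr_ge0 ltW.
    have e1 : 1 - c0 ^+ 2 = s0 ^+ 2 by lra.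
    rewrite cac sin_acos // e1 sqrtr_sqr ger0_norm //.
    by split => //; split => //; split => //; lra.
  have s00 : s0 < 0 by rewrite /s0 pmulr_llt0 ?invr_gt0 // ltNge.
  have ac1 : c0 < 1.
    rewrite lt_neqAle; case/andP: c1 => _ ->; rewrite andbT.
    apply/eqP => e; move: cs0; rewrite e expr1n => h.
    have : s0 ^+ 2 = 0 by lra.
    by move/eqP; rewrite sqrf_eq0 => /eqP s0e; move: s00; rewrite s0e ltxx.
  have acp : 0 < acos c0 by apply: acos_gt0; case/andP: c1 => -> _.
  have -> : 2 * pi - acos c0 = - acos c0 + pi *+ 2 by rewrite addrC mulr_natl.
  have e1 : 1 - c0 ^+ 2 = s0 ^+ 2 by lra.
  rewrite cosD2pi sinD2pi cosN sinN cac sin_acos // e1 sqrtr_sqr.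
  rewrite ltr0_norm // opprK; split => //; split => //; rewrite -mulr_natl; split; lra.
split => //; split; first by apply/andP; rewrite /=; split; lra.
rewrite /= rexpi cosD sinD ca sa; congr (_ +i* _).
  transitivity (cos t0 * (r * c0) - sin t0 * (r * s0)); last by ring.
  by rewrite rc rs /xr /yr -[LHS]mulr1 -cs; ring.
transitivity (sin t0 * (r * c0) + cos t0 * (r * s0)); last by ring.
by rewrite rc rs /xr /yr -[LHS]mulr1 -cs; ring.
Qed.

End Polar.

Section Zhalf.
Variables (R : realType) (t0 : R).

Lemma realcM (a b : R) : a%:C * b%:C = (a * b)%:C.
Proof. by rewrite !realcE mulcE; congr (_ +i* _); ring. Qed.

Lemma conj_rexpi (r t : R) : conjc (r%:C * expi t) = r%:C * expi (- t).
Proof. by rewrite !rexpi conjcE sinN cosN; congr (_ +i* _); ring. Qed.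

Lemma polar0 : polar t0 0 = (1, t0).
Proof.
rewrite polarE; apply: xgetPN => -[r t] /= [r0 [_ E]].
move: E; rewrite rexpi => E.
have e1 := congr1 (@complex.Re R) E; have e2 := congr1 (@complex.Im R) E.
simpl in e1, e2.
have : r ^+ 2 = 0.
  transitivity ((r * cos t) ^+ 2 + (r * sin t) ^+ 2).
    by rewrite -[LHS]mulr1 -(cos2Dsin2 t); ring.
  by rewrite -e1 -e2; ring.
by move/eqP; rewrite sqrf_eq0 gt_eqF.
Qed.

Lemma polar_spec z : z != 0 -> Ppolar t0 z (polar t0 z).
Proof.
case: z => x y nz; rewrite polarE; apply: xgetPex.
by exists (Num.sqrt (x ^+ 2 + y ^+ 2), argE t0 x y); apply: Ppolar_ex.
Qed.

Lemma polar_nz (x y : R) : x +i* y != 0 ->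
  polar t0 (x +i* y) = (Num.sqrt (x ^+ 2 + y ^+ 2), argE t0 x y).
Proof.
by move=> nz; apply: (Ppolar_unique (polar_spec nz)); apply: Ppolar_ex.
Qed.

Lemma polar1_gt0 z : 0 < (polar t0 z).1.
Proof.
case: (eqVneq z 0) => [->|nz]; first by rewrite polar0.
by case: (polar_spec nz).
Qed.

Lemma zhalfD (a b : int) z : zhalf t0 a z * zhalf t0 b z = zhalf t0 (a + b) z.
Proof.
rewrite /zhalf; have r0 := polar1_gt0 z.
rewrite mulrACA realcM expiD -powRD; last by apply/implyP => _; rewrite gt_eqF.
by rewrite intrD !mulrDl.
Qed.

Lemma zhalf_circle (a : int) z :
  complex.Re z ^+ 2 + complex.Im z ^+ 2 = 1 -> zhalf t0 (- a) z = conjc (zhalf t0 a z).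
Proof.
case: z => x y h; simpl in h.
have nz : x +i* y != 0.
  apply/negP => /eqP [x0 y0]; move: h; rewrite x0 y0 expr0n /= addr0 => /eqP.
  by rewrite eq_sym oner_eq0.
rewrite /zhalf polar_nz // h sqrtr1 powR1 conj_rexpi intrN; congr (_ * expi _).
by rewrite !mulNr.
Qed.

Lemma zhalf_refl (a : int) z : z != 0 ->
  conjc (zhalf t0 a ((conjc z)^-1)) = zhalf t0 (- a) z.
Proof.
move=> nz.
have := polar_spec nz; case E: (polar t0 z) => [r t] [r0 [ht ez]]; simpl in r0, ht, ez.
have rn : r != 0 by rewrite gt_eqF.
have wE : (conjc z)^-1 = r^-1%:C * expi t.
  apply: mulr1_eq.
  by rewrite ez conj_rexpi mulrACA realcM expiD addNr expi0 mulr1 divff.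
have wn : (conjc z)^-1 != 0 by rewrite invr_eq0 conjc_eq0.
have Pw : Ppolar t0 ((conjc z)^-1) (r^-1, t).
  by split => //=; rewrite invr_gt0.
have pw := Ppolar_unique (polar_spec wn) Pw.
rewrite /zhalf pw E -[(r^-1, t).1]/(r^-1) -[(r^-1, t).2]/t -[(r, t).1]/r -[(r, t).2]/t.
rewrite conj_rexpi.
have -> : (- a)%:~R * t / 2 = - (a%:~R * t / 2) by rewrite intrN !mulNr.
have e1 : r `^ (a%:~R / 2) * r^-1 `^ (a%:~R / 2) = 1.
  by rewrite -powRM ?divff ?powR1 // ?invr_ge0 ltW.
have -> : r `^ ((- a)%:~R / 2) = r^-1 `^ (a%:~R / 2).
  by rewrite intrN mulNr powRN; apply: mulr1_eq.
by [].
Qed.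

End Zhalf.

Section Meas.
Variables (R : realType) (t0 : R).
Local Notation T := (R * R)%type.

Lemma polar_toC (q : T) : polar t0 (toC q) =
  if (q.1 == 0) && (q.2 == 0) then (1, t0)
  else (Num.sqrt (q.1 ^+ 2 + q.2 ^+ 2), argE t0 q.1 q.2).
Proof.
rewrite /toC; case: ifPn => [/andP[/eqP -> /eqP ->]|h].
  by rewrite -polar0.
apply: polar_nz; apply: contra h => /eqP [-> ->]; by rewrite eqxx.
Qed.

Let mf1 : measurable_fun setT (fun q : T => q.1) := measurable_fst.
Let mf2 : measurable_fun setT (fun q : T => q.2) := measurable_snd.

Lemma mcomp (f : R -> R) (g : T -> R) : continuous f ->
  measurable_fun setT g -> measurable_fun setT (fun q => f (g q)).
Proof. by move=> cf mg; apply: measurableT_comp => //; exact: continuous_measurable_fun. Qed.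

Lemma msqrt : measurable_fun setT (fun q : T => Num.sqrt (q.1 ^+ 2 + q.2 ^+ 2)).
Proof.
apply: mcomp; first exact: sqrt_continuous.
by apply: measurable_funD; apply: measurable_funX.
Qed.

Lemma mbool : measurable_fun setT (fun q : T => (q.1 == 0) && (q.2 == 0)).
Proof.
by apply: measurable_and; apply: measurable_fun_eqr => //; exact: measurable_cst.
Qed.

Lemma clamp1_in (x : R) : -1 <= clamp1 x <= 1.
Proof.
rewrite /clamp1; apply/andP; split; first by rewrite le_max lexx.
by rewrite ge_max ge_min lexx -subr_ge0 opprK (_ : 1 + 1 = 2%:R) // ler0n.
Qed.

Lemma clamp1_nd : {homo (@clamp1 R) : x y / x <= y}.
Proof.
by move=> x y xy; rewrite /clamp1 le_max2 // le_min2.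
Qed.

Lemma macos : measurable_fun setT (fun x : R => acos (clamp1 x)).
Proof.
apply: nonincreasing_measurable => // x y xy.
have hx := clamp1_in x; have hy := clamp1_in y.
have cxy := clamp1_nd xy.
rewrite leNgt; apply/negP => lt.
have ix : acos (clamp1 x) \in `[0, pi]%R by rewrite in_itv /= acos_ge0 // acos_lepi.
have iy : acos (clamp1 y) \in `[0, pi]%R by rewrite in_itv /= acos_ge0 // acos_lepi.
have := lt; rewrite -(ltr_cos ix iy) !acosK ?in_itv //= ?hx ?hy //.
by rewrite ltNge cxy.
Qed.

Lemma margE : measurable_fun setT (fun q : T => argE t0 q.1 q.2).
Proof.
rewrite /argE.
have mxr : measurable_fun setT (fun q : T => q.1 * cos t0 + q.2 * sin t0).
  by apply: measurable_funD; apply: measurable_funM => //; exact: measurable_cst.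
have myr : measurable_fun setT (fun q : T => q.2 * cos t0 - q.1 * sin t0).
  by apply: measurable_funB; apply: measurable_funM => //; exact: measurable_cst.
have minv : measurable_fun setT (fun q : T => (Num.sqrt (q.1 ^+ 2 + q.2 ^+ 2))^-1).
  rewrite (_ : (fun q : T => _) = (fun q : T => (Num.sqrt (q.1 ^+ 2 + q.2 ^+ 2)) `^ (-1))).
    exact: (measurableT_comp (measurable_powR (-1)) msqrt).
  by apply/funext => q; rewrite powR_inv1 // sqrtr_ge0.
have mc : measurable_fun setT (fun q : T => acos (clamp1 ((q.1 * cos t0 + q.2 * sin t0) *
    (Num.sqrt (q.1 ^+ 2 + q.2 ^+ 2))^-1))).
  by apply: measurableT_comp macos _; apply: measurable_funM.
apply: measurable_funD; first exact: measurable_cst.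
apply: measurable_fun_ifT.
- by apply: measurable_fun_ler => //; exact: measurable_cst.
- exact: mc.
- by apply: measurable_funB => //; exact: measurable_cst.
Qed.

Lemma mP1 : measurable_fun setT (fun q : T => (polar t0 (toC q)).1).
Proof.
rewrite (_ : (fun q : T => _) = (fun q : T => if (q.1 == 0) && (q.2 == 0) then 1
   else Num.sqrt (q.1 ^+ 2 + q.2 ^+ 2))).
  by apply: measurable_fun_ifT; [exact: mbool|exact: measurable_cst|exact: msqrt].
by apply/funext => q; rewrite polar_toC; case: ifP.
Qed.

Lemma mP2 : measurable_fun setT (fun q : T => (polar t0 (toC q)).2).
Proof.
rewrite (_ : (fun q : T => _) = (fun q : T => if (q.1 == 0) && (q.2 == 0) then t0
   else argE t0 q.1 q.2)).
  by apply: measurable_fun_ifT; [exact: mbool|exact: measurable_cst|exact: margE].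
by apply/funext => q; rewrite polar_toC; case: ifP.
Qed.

Lemma ReZ (k : int) (z : R[i]) : complex.Re (zhalf t0 k z) =
  (polar t0 z).1 `^ (k%:~R / 2) * cos (k%:~R * (polar t0 z).2 / 2).
Proof. by rewrite /zhalf rexpi. Qed.

Lemma ImZ (k : int) (z : R[i]) : complex.Im (zhalf t0 k z) =
  (polar t0 z).1 `^ (k%:~R / 2) * sin (k%:~R * (polar t0 z).2 / 2).
Proof. by rewrite /zhalf rexpi. Qed.

Lemma mReZ (k : int) : measurable_fun setT (fun q : T => complex.Re (zhalf t0 k (toC q))).
Proof.
under eq_fun do rewrite ReZ.
apply: measurable_funM.
  exact: (measurableT_comp (measurable_powR _) mP1).
apply: mcomp; first exact: continuous_cos.
apply: measurable_funM; last exact: measurable_cst.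
by apply: measurable_funM; [exact: measurable_cst|exact: mP2].
Qed.

Lemma mImZ (k : int) : measurable_fun setT (fun q : T => complex.Im (zhalf t0 k (toC q))).
Proof.
under eq_fun do rewrite ImZ.
apply: measurable_funM.
  exact: (measurableT_comp (measurable_powR _) mP1).
apply: mcomp; first exact: continuous_sin.
apply: measurable_funM; last exact: measurable_cst.
by apply: measurable_funM; [exact: measurable_cst|exact: mP2].
Qed.

End Meas.

Section Integ.
Variables (R : realType) (t0 : R) (mu : {finite_measure set (R * R)%type -> \bar R}).
Hypothesis hmu : mu (~` @unit_circle R) = 0%E.
Local Notation T := (R * R)%type.

Lemma mcircle : measurable (@unit_circle R).
Proof.
have mf : measurable_fun setT (fun q : T => (q.1 ^+ 2 + q.2 ^+ 2 == 1)).
  apply: measurable_fun_eqr; last exact: measurable_cst.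
  by apply: measurable_funD; apply: measurable_funX; [exact: measurable_fst|exact: measurable_snd].
have := mf measurableT [set true] I; rewrite setTI.
congr measurable; apply/seteqP; split => q /=.
  by move/eqP.
by move=> ->; rewrite eqxx.
Qed.

Lemma ae_circle (P : T -> Prop) : (forall q, unit_circle q -> P q) ->
  {ae mu, forall q, P q}.
Proof.
move=> H; exists (~` (@unit_circle R)); split => //.
  exact: measurableC mcircle.
by move=> q /= nP cq; apply: nP; exact: H.
Qed.

Lemma int_bounded (f : T -> R) : measurable_fun setT f ->
  (forall q, unit_circle q -> `|f q| <= 1) -> mu.-integrable setT (EFin \o f).
Proof.
move=> mf hb; apply/integrableP; split; first exact/measurable_EFinP.
apply: (le_lt_trans (@integral_le_bound _ _ _ mu setT _ 1%:E _ _ _ _)) => //.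
- exact/measurable_EFinP.
- by apply: ae_circle => q cq _ /=; rewrite lee_fin hb.
by rewrite mul1e; apply: fin_num_fun_lty; exact: fin_num_measure.
Qed.

Lemma polar1_circle (q : T) : unit_circle q -> (polar t0 (toC q)).1 = 1.
Proof.
move=> hq; rewrite polar_toC; case: ifP => // _.
by rewrite /= hq sqrtr1.
Qed.

Definition cok (f : T -> R[i]) :=
  mu.-integrable setT (EFin \o (fun q => complex.Re (f q))) /\
  mu.-integrable setT (EFin \o (fun q => complex.Im (f q))).

Lemma cok_zhalf k : cok (fun q => zhalf t0 k (toC q)).
Proof.
split; apply: int_bounded; try exact: mReZ; try exact: mImZ; move=> q cq.
  rewrite ReZ polar1_circle // powR1 mul1r ler_norml cos_geN1 cos_le1 //.
rewrite ImZ polar1_circle // powR1 mul1r ler_norml sin_geN1 sin_le1 //.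
Qed.

Lemma ReD (x y : R[i]) : complex.Re (x + y) = complex.Re x + complex.Re y.
Proof. by case: x; case: y. Qed.
Lemma ImD (x y : R[i]) : complex.Im (x + y) = complex.Im x + complex.Im y.
Proof. by case: x; case: y. Qed.
Lemma ReM (x y : R[i]) : complex.Re (x * y) = complex.Re x * complex.Re y - complex.Im x * complex.Im y.
Proof. by case: x; case: y. Qed.
Lemma ImM (x y : R[i]) : complex.Im (x * y) = complex.Re x * complex.Im y + complex.Im x * complex.Re y.
Proof. by case: x; case: y. Qed.

Lemma cokD f g : cok f -> cok g -> cok (fun q => f q + g q).
Proof.
move=> [f1 f2] [g1 g2]; split.
  under eq_fun do rewrite ReD; rewrite (_ : _ \o _ = (EFin \o (fun q => complex.Re (f q))) \+ (EFin \o (fun q => complex.Re (g q))))%E //.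
  exact: integrableD.
under eq_fun do rewrite ImD; rewrite (_ : _ \o _ = (EFin \o (fun q => complex.Im (f q))) \+ (EFin \o (fun q => complex.Im (g q))))%E //.
exact: integrableD.
Qed.

Lemma cokZ a f : cok f -> cok (fun q => a * f q).
Proof.
move=> [f1 f2]; split.
  under eq_fun do rewrite ReM.
  rewrite (_ : _ \o _ = (fun q => (complex.Re a)%:E * (EFin \o (fun q => complex.Re (f q))) q) \- (fun q => (complex.Im a)%:E * (EFin \o (fun q => complex.Im (f q))) q))%E //.
  by apply: integrableB => //; apply: integrableZl.
under eq_fun do rewrite ImM.
rewrite (_ : _ \o _ = (fun q => (complex.Re a)%:E * (EFin \o (fun q => complex.Im (f q))) q) \+ (fun q => (complex.Im a)%:E * (EFin \o (fun q => complex.Re (f q))) q))%E //.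
by apply: integrableD => //; apply: integrableZl.
Qed.

Lemma cint0 : cint mu (fun _ => 0) = 0.
Proof.
by rewrite /cint /= !Rintegral_cst // !mul0r.
Qed.


Lemma intZ k f : mu.-integrable setT (EFin \o f) ->
  mu.-integrable setT (EFin \o (fun q : T => k * f q)).
Proof.
move=> hf; rewrite (_ : _ \o _ = (fun q => k%:E * (EFin \o f) q))%E //.
exact: integrableZl.
Qed.

Lemma cintD f g : cok f -> cok g ->
  cint mu (fun q => f q + g q) = cint mu f + cint mu g.
Proof.
move=> [f1 f2] [g1 g2]; rewrite /cint.
rewrite (@eq_Rintegral _ _ _ _ _ (fun q => complex.Re (f q) + complex.Re (g q))); last first.
  by move=> q _; rewrite ReD.
rewrite (@eq_Rintegral _ _ _ _ _ (fun q => complex.Im (f q) + complex.Im (g q)) (fun q => complex.Im (f q + g q))); last first.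
  by move=> q _; rewrite ImD.
by rewrite !RintegralD.
Qed.

Lemma cintZ a f : cok f -> cint mu (fun q => a * f q) = a * cint mu f.
Proof.
move=> [f1 f2]; rewrite /cint.
rewrite (@eq_Rintegral _ _ _ _ _ (fun q => complex.Re a * complex.Re (f q) - complex.Im a * complex.Im (f q))); last first.
  by move=> q _; rewrite ReM.
rewrite (@eq_Rintegral _ _ _ _ _ (fun q => complex.Re a * complex.Im (f q) + complex.Im a * complex.Re (f q)) (fun q => complex.Im (a * f q))); last first.
  by move=> q _; rewrite ImM.
rewrite RintegralB ?RintegralD ?RintegralZl //; try exact: intZ.
by case: a => ar ai /=; rewrite mulcE.
Qed.

Lemma cok0 : cok (fun _ => 0).
Proof.
split; apply: int_bounded => //; try (by move=> q _; rewrite normr0);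
  exact: (measurable_cst (0 : R)).
Qed.

Lemma cint_sum (I : Type) (s : seq I) (F : I -> T -> R[i]) :
  (forall i, cok (F i)) ->
  cok (fun q => \sum_(i <- s) F i q) /\
  cint mu (fun q => \sum_(i <- s) F i q) = \sum_(i <- s) cint mu (F i).
Proof.
move=> hF; elim: s => [|i s [IH1 IH2]].
  have -> : (fun q => \sum_(i <- [::]) F i q) = (fun _ => 0).
    by apply/funext => q; rewrite big_nil.
  by rewrite big_nil; split; [exact: cok0|exact: cint0].
have -> : (fun q => \sum_(j <- i :: s) F j q) = (fun q => F i q + \sum_(j <- s) F j q).
  by apply/funext => q; rewrite big_cons.
rewrite big_cons; split; first exact: cokD.
by rewrite cintD // IH2.
Qed.

Lemma Rint_ae (f g : T -> R) : measurable_fun setT f -> measurable_fun setT g ->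
  (forall q, unit_circle q -> f q = g q) ->
  Rintegral mu setT f = Rintegral mu setT g.
Proof.
move=> mf mg h; rewrite /Rintegral; congr fine.
apply: ae_eq_integral => //; try exact/measurable_EFinP.
by apply: ae_circle => q cq _; rewrite /= h.
Qed.

Lemma cint_conj k : cint mu (fun q => zhalf t0 (- k) (toC q)) =
  conjc (cint mu (fun q => zhalf t0 k (toC q))).
Proof.
rewrite /cint conjcE; congr (_ +i* _).
  apply: Rint_ae; try exact: mReZ.
  by move=> q cq; rewrite zhalf_circle //; case: (zhalf t0 k (toC q)).
transitivity (Rintegral mu setT (fun q => -1 * complex.Im (zhalf t0 k (toC q)))).
  apply: Rint_ae; first exact: mImZ.
    by apply: measurable_funM; [exact: measurable_cst|exact: mImZ].
  by move=> q cq; rewrite zhalf_circle //; case: (zhalf t0 k (toC q)) => x y /=; rewrite mulN1r.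
by rewrite RintegralZl ?mulN1r //; case: (cok_zhalf k).
Qed.

Lemma cint_span (a2 : int) m (c : 'I_m -> R[i]) (e : int) :
  cint mu (fun q => spanfun t0 a2 c (toC q) * zhalf t0 e (toC q)) =
  \sum_(i < m) c i * cint mu (fun q => zhalf t0 (a2 + 2 * (i : nat)%:Z + e) (toC q)).
Proof.
pose F := fun (i : 'I_m) (q : T) => c i * zhalf t0 (a2 + 2 * (i : nat)%:Z + e) (toC q).
have hF : forall i, cok (F i) by move=> i; apply: cokZ; exact: cok_zhalf.
have -> : (fun q => spanfun t0 a2 c (toC q) * zhalf t0 e (toC q)) =
          (fun q => \sum_(i <- index_enum 'I_m) F i q).
  apply/funext => q; rewrite /spanfun mulr_suml; apply: eq_bigr => i _.
  by rewrite /F -mulrA zhalfD.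
rewrite (cint_sum _ hF).2; apply: eq_bigr => i _; rewrite /F cintZ //.
exact: cok_zhalf.
Qed.

End Integ.

Section Alg.
Variables (R : realType) (t0 : R).

Lemma spanfun_lin (a2 : int) m (a b : R[i]) (f g : 'I_m -> R[i]) z :
  spanfun t0 a2 (fun i => a * f i + b * g i) z =
  a * spanfun t0 a2 f z + b * spanfun t0 a2 g z.
Proof.
rewrite /spanfun !mulr_sumr -big_split /=; apply: eq_bigr => i _; ring.
Qed.

Lemma tau_unit (tau : R[i]) : `|tau| = 1 -> tau * conjc tau = 1.
Proof.
case: tau => a b; rewrite normcE => h.
have h1 := congr1 (@complex.Re R) h; simpl in h1.
have h2 : a ^+ 2 + b ^+ 2 = 1.
  by rewrite -(sqr_sqrtr (addr_ge0 (sqr_ge0 a) (sqr_ge0 b))) h1 expr1n.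
rewrite conjcE mulcE; apply/eqP; rewrite eq_complex /=; apply/andP; split; apply/eqP.
  by rewrite -h2; ring.
by ring.
Qed.

Lemma conj_i : conjc ('i%C : R[i]) = - 'i%C.
Proof. by apply/eqP; rewrite eq_complex /= oppr0 !eqxx. Qed.

Lemma i_neq0 : ('i%C : R[i]) != 0.
Proof. by apply/eqP => -[] /eqP; rewrite oner_eq0. Qed.

Lemma conjc_sum m (F : 'I_m -> R[i]) : conjc (\sum_(i < m) F i) = \sum_(i < m) conjc (F i).
Proof. by rewrite rmorph_sum. Qed.

Lemma conjcM (x y : R[i]) : conjc (x * y) = conjc x * conjc y.
Proof. by rewrite rmorphM. Qed.

Lemma conjcD (x y : R[i]) : conjc (x + y) = conjc x + conjc y.
Proof. by rewrite rmorphD. Qed.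

Lemma conj_conj_inv (z : R[i]) : (conjc ((conjc z)^-1))^-1 = z.
Proof. by rewrite conjc_inv conjcK invrK. Qed.

End Alg.

From mathcomp Require Import zify.
Unset Implicit Arguments.
Set Strict Implicit.

Theorem proposition3p3 (R : realType) (r : nat)
  (mu : 'I_r -> {finite_measure set (R * R)%type -> \bar R})
  (mu_circle : forall j : 'I_r, mu j (~` @unit_circle R) = 0%E)
  (mu_infinite : forall j : 'I_r, ~ finite_set (msupport (mu j)))
  (t0 : R) (n : 'I_r -> nat) (tau : R[i]) (htau : `|tau| = 1) :
  phi_normal t0 (fun j => (mu j : {measure set (R * R)%type -> \bar R})) n <->
  ~ exists c : 'I_(nabs n) -> R[i],
      c <> (fun _ => 0) /\
      (forall z : R[i], z != 0 ->
         spanfun t0 (1 - (nabs n)%:Z) c z =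
         tau * (spanfun t0 (1 - (nabs n)%:Z) c ((z^*)^-1))^*) /\
      (forall (j : 'I_r) (l : 'I_(n j)),
         cint (mu j) (fun q =>
           spanfun t0 (1 - (nabs n)%:Z) c (toC q) *
           zhalf t0 (- (1 - (n j)%:Z + 2 * (l : nat)%:Z)) (toC q)) = 0).
Proof.
rewrite /phi_normal.
set N := nabs n.
pose G (j : 'I_r) (m : int) := cint (mu j) (fun q => zhalf t0 m (toC q)).
pose EX (i : nat) (j : 'I_r) (l : nat) : int :=
  (1 - N%:Z) + 2 * i%:Z + (- (1 - (n j)%:Z + 2 * l%:Z)).
pose EP (i : nat) (j : 'I_r) (l : nat) : int :=
  (- N%:Z) + 2 * i%:Z + (- (- (n j)%:Z + 2 * l%:Z)).
have LX : forall (c : 'I_N -> R[i]) j (l : 'I_(n j)),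
  cint (mu j) (fun q => spanfun t0 (1 - N%:Z) c (toC q) *
     zhalf t0 (- (1 - (n j)%:Z + 2 * (l : nat)%:Z)) (toC q)) =
  \sum_(i < N) c i * G j (EX i j l).
  by move=> c j l; rewrite (@cint_span R t0 (mu j) (mu_circle j)).
have LP : forall (c : 'I_N.+1 -> R[i]) j (l : 'I_(n j)),
  cint (mu j) (fun q => spanfun t0 (- N%:Z) c (toC q) *
     zhalf t0 (- (- (n j)%:Z + 2 * (l : nat)%:Z)) (toC q)) =
  \sum_(i < N) c (lift ord_max i) * G j (EX i j l) + c ord_max * G j (EP N j l).
  move=> c j l; rewrite (@cint_span R t0 (mu j) (mu_circle j)) big_ord_recr /=.
  congr (_ + _); apply: eq_bigr => i _.
  have -> : widen_ord (leqnSn N) i = lift ord_max i by apply/val_inj; rewrite /= /bump leqNgt ltn_ord.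
  by congr (_ * G j _); rewrite /EX; ring.
have Gconj : forall j m, G j (- m) = conjc (G j m).
  by move=> j m; rewrite /G (@cint_conj R t0 (mu j) (mu_circle j)).
have EXrev : forall (i : 'I_N) j (l : 'I_(n j)),
    EX (rev_ord i) j l = - EX i j (rev_ord l).
  move=> i j l; rewrite /EX /=.
  have hi := ltn_ord i; have hl := ltn_ord l.
  lia.
pose KX (c : 'I_N -> R[i]) := forall j (l : 'I_(n j)), \sum_(i < N) c i * G j (EX i j l) = 0.
have KXlin : forall a b f g, KX f -> KX g -> KX (fun i => a * f i + b * g i).
  move=> a b f g Kf Kg j l.
  transitivity (a * \sum_(i < N) f i * G j (EX i j l) + b * \sum_(i < N) g i * G j (EX i j l)).
    by rewrite !mulr_sumr -big_split /=; apply: eq_bigr => i _; ring.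
  by rewrite Kf Kg !mulr0 addr0.
have ttau := tau_unit htau.
split.
  move=> Hn [c [cn0 [_ cker]]].
  case: Hn => [n0|[c1 [[c1max c1cond] c1uniq]]].
    have N0 : N = 0%N by rewrite /N /nabs n0 big1.
    apply: cn0; apply/funext => i; exfalso.
    by have := ltn_ord i; rewrite {2}N0.
  pose c2 := fun i : 'I_N.+1 => c1 i +
    (if unlift ord_max i is Some i' then c i' else 0).
  have P2 : c2 ord_max = 1 /\ (forall j (l : 'I_(n j)),
      cint (mu j) (fun q => spanfun t0 (- N%:Z) c2 (toC q) *
        zhalf t0 (- (- (n j)%:Z + 2 * (l : nat)%:Z)) (toC q)) = 0).
    split; first by rewrite /c2 unlift_none addr0.
    move=> j l; rewrite LP.
    have := c1cond j l; rewrite LP => h1.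
    have := cker j l; rewrite LX => h2.
    rewrite /c2 unlift_none addr0.
    rewrite (eq_bigr (fun i => c1 (lift ord_max i) * G j (EX i j l) + c i * G j (EX i j l))); last first.
      by move=> i _; rewrite liftK mulrDl.
    rewrite big_split /=.
    set S1 := \sum_(i < N) _; set S2 := \sum_(i < N) _ in h2 *.
    transitivity ((S1 + c1 ord_max * G j (EP N j l)) + S2); first by ring.
    by rewrite h1 h2 addr0.
  have := c1uniq c2 P2 => e.
  apply: cn0; apply/funext => i.
  have := congr1 (fun f => f (lift ord_max i)) e; rewrite /c2 liftK /=.
  rewrite -[X in X = _]addr0 => /addrI. done.
move=> H.
have ker : forall c : 'I_N -> R[i], KX c -> c = (fun _ => 0).
  move=> c Kc; case: (pselect (c = fun _ => 0)) => // cn0; exfalso.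
  pose cs := fun i : 'I_N => tau * conjc (c (rev_ord i)).
  have Kcs : KX cs.
    move=> j l; rewrite (reindex_inj rev_ord_inj) /=.
    transitivity (tau * conjc (\sum_(i < N) c i * G j (EX i j (rev_ord l)))); last first.
      by rewrite Kc conjc0 mulr0.
    rewrite conjc_sum mulr_sumr; apply: eq_bigr => i _.
    rewrite /cs rev_ordK conjcM -mulrA; congr (_ * (_ * _)).
    by rewrite (_ : EX (N - i.+1)%N j l = - EX i j (rev_ord l)) ?Gconj //; apply: (EXrev i j l).
  have Scs : forall z, z != 0 -> spanfun t0 (1 - N%:Z) cs z =
      tau * conjc (spanfun t0 (1 - N%:Z) c ((conjc z)^-1)).
    move=> z nz; rewrite /spanfun conjc_sum mulr_sumr (reindex_inj rev_ord_inj).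
    apply: eq_bigr => i _ /=.
    rewrite /cs rev_ordK conjcM zhalf_refl // mulrA; congr (_ * zhalf _ _ _).
    have hi := ltn_ord i; lia.
  have Sc : forall z, z != 0 -> spanfun t0 (1 - N%:Z) c z =
      tau * conjc (spanfun t0 (1 - N%:Z) cs ((conjc z)^-1)).
    move=> z nz.
    have nw : (conjc z)^-1 != 0 by rewrite invr_eq0 conjc_eq0.
    rewrite Scs // conj_conj_inv conjcM conjcK mulrA ttau mul1r //.
  have build : forall a, (fun i => a * c i + conjc a * cs i) <> (fun _ => 0) -> False.
    move=> a Xn0; apply: H; exists (fun i => a * c i + conjc a * cs i); split => //.
    split.
      move=> z nz; rewrite !spanfun_lin.
      have nw : (conjc z)^-1 != 0 by rewrite invr_eq0 conjc_eq0.
      rewrite (Sc z nz) (Scs z nz).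
      rewrite !NconjE conjcD !conjcM conjcK. by rewrite mulrDr addrC !mulrA [a * tau]mulrC [conjc a * tau]mulrC.
    by move=> j l; rewrite LX; apply: KXlin.
  case: (pselect ((fun i => 1 * c i + conjc 1 * cs i) = (fun _ => 0))) => [e1|]; last first.
    exact: build.
  case: (pselect ((fun i => 'i%C * c i + conjc 'i%C * cs i) = (fun _ => 0))) => [e2|]; last first.
    exact: build.
  apply: cn0; apply/funext => i.
  have h1 : 1 * c i + conjc 1 * cs i = 0 := congr1 (fun f => f i) e1.
  have h2 : 'i%C * c i + conjc 'i%C * cs i = 0 := congr1 (fun f => f i) e2.
  have cc1 : conjc (1 : R[i]) = 1 by apply/eqP; rewrite eq_complex /= oppr0 !eqxx.
  move: h1; rewrite cc1 !mul1r => h1.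
  have csE : cs i = - c i by apply/eqP; rewrite -subr_eq0 opprK addrC h1.
  move: h2; rewrite conj_i csE mulNr mulrN opprK => /eqP.
  rewrite -mulrDr mulf_eq0 (negbTE (@i_neq0 R)) /= => /eqP h3.
  by move/eqP: h3; rewrite -mulr2n mulrn_eq0 /= => /eqP.
pose S := {j : 'I_r & 'I_(n j)}.
have cardS : #|{: S}| = N.
  rewrite card_tagged /N /nabs sumnE big_map big_enum /=.
  by apply: eq_bigr => j _; rewrite card_ord.
pose ek := fun k : 'I_N => (enum_val (cast_ord (esym cardS) k) : S).
pose ik := fun s : S => cast_ord cardS (enum_rank s).
have ekK : forall s, ek (ik s) = s.
  by move=> s; rewrite /ek /ik cast_ordK enum_rankK.
pose M : 'M[R[i]]_N := \matrix_(i, k) G (tag (ek k)) (EX i (tag (ek k)) (tagged (ek k))).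
have Mrow : forall (v : 'rV_N) j (l : 'I_(n j)),
    (v *m M) 0 (ik (Tagged (fun j => 'I_(n j)) l)) = \sum_(i < N) v 0 i * G j (EX i j l).
  by move=> v j l; rewrite mxE; apply: eq_bigr => i _; rewrite mxE ekK.
have Mfree : row_free M.
  rewrite -kermx_eq0; apply/negPn/negP => /rowV0Pn [v /sub_kermxP vM vn0].
  have Kv : KX (fun i => v 0 i).
    by move=> j l; rewrite -Mrow vM mxE.
  have := ker _ Kv => e; move/eqP: vn0; apply; apply/rowP => i.
  by rewrite mxE (congr1 (fun f => f i) e).
have Munit : M \in unitmx by rewrite -row_free_unit.
pose b : 'rV_N := \row_k G (tag (ek k)) (EP N (tag (ek k)) (tagged (ek k))).
pose w : 'rV_N := - (b *m invmx M).
have wM : w *m M = - b by rewrite mulNmx mulmxKV.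
have wcond : forall j (l : 'I_(n j)),
    \sum_(i < N) w 0 i * G j (EX i j l) = - G j (EP N j l).
  move=> j l; rewrite -Mrow wM mxE mxE ekK //.
pose c' := fun i : 'I_N.+1 => if unlift ord_max i is Some i' then w 0 i' else 1.
right; exists c'; split.
  split; first by rewrite /c' unlift_none.
  move=> j l; rewrite LP /c' unlift_none mul1r.
  rewrite (eq_bigr (fun i => w 0 i * G j (EX i j l))); last by move=> i _; rewrite liftK.
  by rewrite wcond addNr.
move=> y [ymax ycond].
have Ky : KX (fun i => y (lift ord_max i) - w 0 i).
  move=> j l; have := ycond j l; rewrite LP ymax mul1r => hy.
  rewrite (eq_bigr (fun i => y (lift ord_max i) * G j (EX i j l) - w 0 i * G j (EX i j l))); last first.
    by move=> i _; rewrite mulrBl.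
  rewrite sumrB wcond opprK; exact: hy.
have e := ker _ Ky.
apply/funext => i; case: (unliftP ord_max i) => [i' ->|->].
  rewrite /c' liftK; have := congr1 (fun f => f i') e.
  by move/eqP; rewrite subr_eq0 eq_sym => /eqP.
by rewrite /c' unlift_none ymax.
Qed.
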